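(* Let $X$ be a coverable vertex parameter, let $G$ be a graph, and let $v\in V(G)$. If $X(G)=X(G-v)+1$, then $\mathcal{R}^{\mathrm{TE}}_X(G-v)$ is isomorphic to a subgraph of $\mathcal{R}^{\mathrm{TE}}_X(G)$ and $\mathcal{R}^{\mathrm{TS}}_X(G-v)$ is isomorphic to a subgraph of $\mathcal{R}^{\mathrm{TS}}_X(G)$.
   Context: All graphs are finite and simple. A graph parameter $X$ is a vertex parameter defined by property $x$ if for every graph $G$, $X(G)$ equals either (for every graph) the maximum, or (for every graph) the minimum, of $|B|$ over all $B\subseteq V(G)$ having property $x$ in $G$. $X$ is coverable if for every graph $G$ and every $v\in V(G)$, whenever $B$ has property $x$ in $G-v$, the set $B\cup\{v\}$ has property $x$ in $G$. The token exchange graph $\mathcal{R}^{\mathrm{TE}}_X(G)$ has as vertices all $S\subseteq V(G)$ with $|S|=X(G)$ having property $x$ in $G$, with $S_1S_2$ an edge iff there exist $v_1\in S_1\setminus S_2$, $v_2\in S_2\setminus S_1$ with $S_1\setminus\{v_1\}=S_2\setminus\{v_2\}$; the token sliding graph $\mathcal{R}^{\mathrm{TS}}_X(G)$ has the same vertices with the additional requirement $v_1v_2\in E(G)$. *)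

(* Defs.v *)
From mathcomp Require Import all_boot.
Set Implicit Arguments. Unset Strict Implicit. Unset Printing Implicit Defensive.

Record sgraph := SGraph {
  vert : finType;
  adj : rel vert;
  adj_sym : symmetric adj;
  adj_irr : irreflexive adj }.

Section Del.
Variables (G : sgraph) (v : vert G).
Definition del_vert : finType := {u : vert G | u != v}.
Definition del_adj : rel del_vert := fun a b => adj (val a) (val b).
Lemma del_adj_sym : symmetric del_adj.
Proof. by move=> a b; rewrite /del_adj adj_sym. Qed.
Lemma del_adj_irr : irreflexive del_adj.
Proof. by move=> a; rewrite /del_adj adj_irr. Qed.
Arguments del_vert : clear implicits.
Definition del : sgraph := SGraph del_adj_sym del_adj_irr.
End Del.
Arguments del : clear implicits.

Definition vprop := forall G : sgraph, {set vert G} -> Prop.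

Definition is_max_card (x : vprop) (G : sgraph) (k : nat) : Prop :=
  (exists B, x G B /\ #|B| = k) /\ (forall B, x G B -> #|B| <= k).
Definition is_min_card (x : vprop) (G : sgraph) (k : nat) : Prop :=
  (exists B, x G B /\ #|B| = k) /\ (forall B, x G B -> k <= #|B|).

Definition vertex_param_by (x : vprop) (X : sgraph -> nat) : Prop :=
  (forall G, is_max_card x G (X G)) \/ (forall G, is_min_card x G (X G)).

Definition coverable (x : vprop) : Prop :=
  forall (G : sgraph) (v : vert G) (B : {set vert (del G v)}),
    x (del G v) B -> x G ((fun u : vert (del G v) => val u) @: B :|: [set v]).

Definition R_vert (x : vprop) (X : sgraph -> nat) (G : sgraph)
  (S : {set vert G}) : Prop := #|S| = X G /\ x G S.

Definition TE_adj (G : sgraph) (S1 S2 : {set vert G}) : Prop :=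
  exists v1 v2, v1 \in S1 :\: S2 /\ v2 \in S2 :\: S1 /\ S1 :\ v1 = S2 :\ v2.

Definition TS_adj (G : sgraph) (S1 S2 : {set vert G}) : Prop :=
  exists v1 v2, v1 \in S1 :\: S2 /\ v2 \in S2 :\: S1 /\ S1 :\ v1 = S2 :\ v2
                /\ adj v1 v2.

(* The graph (V1, E1) (vertices: elements of T1 satisfying V1) is isomorphic
   to a subgraph of (V2, E2): there is an injective map on vertices sending
   edges to edges. *)
Definition embeds_in (T1 T2 : Type) (V1 : T1 -> Prop) (E1 : T1 -> T1 -> Prop)
  (V2 : T2 -> Prop) (E2 : T2 -> T2 -> Prop) : Prop :=
  exists f : T1 -> T2,
    (forall a, V1 a -> V2 (f a)) /\
    (forall a b, V1 a -> V1 b -> f a = f b -> a = b) /\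
    (forall a b, V1 a -> V1 b -> E1 a b -> E2 (f a) (f b)).
Arguments R_vert : clear implicits.
Arguments TE_adj : clear implicits.
Arguments TS_adj : clear implicits.

(* Main.v *)
Require Import Defs.
From mathcomp Require Import all_boot.

Section Aux.
Variables (G : sgraph) (v : vert G).
Definition fS (S : {set vert (del G v)}) : {set vert G} :=
  (fun u : vert (del G v) => val u) @: S :|: [set v].

Lemma memf (S : {set vert (del G v)}) (u : vert (del G v)) :
  (val u \in fS S) = (u \in S).
Proof.
rewrite /fS !inE (mem_imset _ _ val_inj).
by have := valP u; rewrite /= => /negbTE ->; rewrite orbF.
Qed.

Lemma memfv (S : {set vert (del G v)}) : v \in fS S.
Proof. by rewrite /fS !inE eqxx orbT. Qed.

Lemma vert_cases (y : vert G) : y = v \/ exists u : vert (del G v), y = val u.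
Proof.
case: (eqVneq y v) => [->|h]; first by left.
by right; exists (exist _ y h).
Qed.

Lemma fS_card S : #|fS S| = #|S| + 1.
Proof.
rewrite /fS setUC cardsU1 (card_imset _ val_inj) addnC.
case: imsetP => [[u _ e]|//].
by have := valP u; rewrite /= -e eqxx.
Qed.

Lemma fS_inj S1 S2 : fS S1 = fS S2 -> S1 = S2.
Proof. by move=> e; apply/setP => u; rewrite -!memf e. Qed.

Lemma fS_D1 S u : fS S :\ val u = fS (S :\ u).
Proof.
apply/setP => y; case: (vert_cases y) => [->|[w ->]].
  rewrite !inE !eqxx !orbT andbT.
  by have := valP u; rewrite /= eq_sym.


by rewrite in_setD1 !memf in_setD1 (inj_eq val_inj).
Qed.

Lemma fS_D S1 S2 u : (val u \in fS S1 :\: fS S2) = (u \in S1 :\: S2).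
Proof. by rewrite in_setD !memf in_setD. Qed.
End Aux.

Theorem theorem3p6 (x : vprop) (X : sgraph -> nat)
  (hX : vertex_param_by x X) (hcov : coverable x)
  (G : sgraph) (v : vert G) (hv : X G = X (del G v) + 1) :
  embeds_in (R_vert x X (del G v)) (TE_adj (del G v))
            (R_vert x X G) (TE_adj G) /\
  embeds_in (R_vert x X (del G v)) (TS_adj (del G v))
            (R_vert x X G) (TS_adj G).
Proof.
have hV : forall S, R_vert x X (del G v) S -> R_vert x X G (@fS G v S).
  move=> S [c h]; split; first by rewrite fS_card c hv.
  exact: hcov.
split; exists (@fS G v); (split; [exact: hV | split; [by move=> a b _ _; apply: fS_inj |]]).
  move=> a b _ _ [v1 [v2 [h1 [h2 e]]]].
  exists (val v1), (val v2); rewrite !fS_D !fS_D1 e; by [].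
move=> a b _ _ [v1 [v2 [h1 [h2 [e ad]]]]].
exists (val v1), (val v2); rewrite !fS_D !fS_D1 e; by [].
Qed.
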